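(* Let $t\in\mathbb{R}\setminus\{2\}$ (when $t>2$, all matrices and vectors involved are assumed to have strictly positive entries), $\varepsilon\ge 0$, $\tilde r,\tilde c\in\tilde\Delta_n$. For any $\tilde P,\tilde Q\in\tilde U_n^{\varepsilon}(\tilde r,\tilde c)$ and any $\beta\in[0,1]$, $$\big(\beta\,\tilde P^{1/t^*}+(1-\beta)\,\tilde Q^{1/t^*}\big)^{t^*}\in\tilde U_n^{\varepsilon}(\tilde r,\tilde c).$$
   Context: $t^*=1/(2-t)$; powers of vectors/matrices are entrywise. For $s\neq1$, $\log_s(z)=(z^{1-s}-1)/(1-s)$; $\log_1=\log$ and $\log_0(z)=z-1$. Co-simplex: $\tilde\Delta_n=\{\tilde p\in\mathbb{R}^n:\tilde p\ge0,\ \sum_i\tilde p_i^{1/t^*}=1\}$. Co-polytope: $\tilde U_n(\tilde r,\tilde c)=\{\tilde P\in\mathbb{R}^{n\times n}_{\ge0}:\sum_j\tilde P_{ij}^{1/t^*}=\tilde r_i^{1/t^*}\ \forall i,\ \sum_i\tilde P_{ij}^{1/t^*}=\tilde c_j^{1/t^*}\ \forall j\}$. Tempered relative entropy: $D_t(\tilde u\|\tilde v)=\sum_k[\tilde u_k(\log_t\tilde u_k-\log_t\tilde v_k)-\log_{t-1}\tilde u_k+\log_{t-1}\tilde v_k]$ (sum over all entries). Ball: $\tilde U_n^{\varepsilon}(\tilde r,\tilde c)=\{\tilde P\in\tilde U_n(\tilde r,\tilde c): D_t(\tilde P\|\tilde r\tilde c^\top)\le\varepsilon\}$. *)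

(* Defs.v *)
From HB Require Import structures.
From mathcomp Require Import all_boot all_order all_algebra.
From mathcomp Require Import all_classical all_reals.
From mathcomp Require Import exp.
Set Implicit Arguments. Unset Strict Implicit. Unset Printing Implicit Defensive.
Import Order.TTheory GRing.Theory Num.Theory.
Local Open Scope ring_scope.

Section TemperedDefs.
Variable R : realType.

Definition tstar (t : R) : R := 1 / (2 - t).

Definition logs (s z : R) : R :=
  if s == 1 then ln z else (powR z (1 - s) - 1) / (1 - s).

Definition cosimplex (t : R) (n : nat) (p : 'rV[R]_n) : Prop :=
  (forall i, 0 <= p 0 i) /\ \sum_(i < n) powR (p 0 i) (1 / tstar t) = 1.

Definition copolytope (t : R) (n : nat) (r c : 'rV[R]_n) (P : 'M[R]_n) : Prop :=
  [/\ forall i j, 0 <= P i j,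
      forall i, \sum_(j < n) powR (P i j) (1 / tstar t) = powR (r 0 i) (1 / tstar t)
    & forall j, \sum_(i < n) powR (P i j) (1 / tstar t) = powR (c 0 j) (1 / tstar t)].

Definition Dt (t : R) (n : nat) (U V : 'M[R]_n) : R :=
  \sum_(i < n) \sum_(j < n)
    (U i j * (logs t (U i j) - logs t (V i j))
     - logs (t - 1) (U i j) + logs (t - 1) (V i j)).

Definition outer (n : nat) (r c : 'rV[R]_n) : 'M[R]_n :=
  \matrix_(i, j) (r 0 i * c 0 j).

Definition coball (t eps : R) (n : nat) (r c : 'rV[R]_n) (P : 'M[R]_n) : Prop :=
  copolytope t r c P /\ Dt t P (outer r c) <= eps.

Definition comix (t beta : R) (n : nat) (P Q : 'M[R]_n) : 'M[R]_n :=
  \matrix_(i, j) powR (beta * powR (P i j) (1 / tstar t)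
                   + (1 - beta) * powR (Q i j) (1 / tstar t)) (tstar t).

End TemperedDefs.

(* Main.v *)
Require Import Defs.
From HB Require Import structures.
From mathcomp Require Import all_boot all_order all_algebra.
From mathcomp Require Import all_classical all_reals.
From mathcomp Require Import exp.
From mathcomp Require Import interval_inference sequences convex hoelder.
From mathcomp Require Import ring lra.
Import Order.TTheory GRing.Theory Num.Theory.
Local Open Scope ring_scope.

Section J.
Variable R : realType.
Implicit Types e x y b z m t u U V : R.

Lemma jA e x y b : 1 <= e -> 0 <= x -> 0 <= y -> 0 <= b -> b <= 1 ->
  powR (b * x + (1 - b) * y) e <= b * powR x e + (1 - b) * powR y e.
Proof.
move=> e1 x0 y0 b0 b1.
have := @convex_powR R e e1 (Itv01 b0 b1) x y.
rewrite !convRE /=; apply.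
  by rewrite inE /= in_itv /= x0.
by rewrite inE /= in_itv /= y0.
Qed.

Lemma powRK e x : e != 0 -> 0 <= x -> powR (powR x e) e^-1 = x.
Proof. by move=> e0 x0; rewrite -powRrM mulfV // powRr1. Qed.

Lemma jB e x y b : 0 < e -> e <= 1 -> 0 <= x -> 0 <= y -> 0 <= b -> b <= 1 ->
  b * powR x e + (1 - b) * powR y e <= powR (b * x + (1 - b) * y) e.
Proof.
move=> e0 e1 x0 y0 b0 b1.
have e1' : 1 <= e^-1 by rewrite invf_ge1.
have := @jA (e^-1) (powR x e) (powR y e) b e1' (powR_ge0 x e) (powR_ge0 y e) b0 b1.
rewrite !powRK ?gt_eqF // => H.
have := @ge0_ler_powR R e (ltW e0) _ _ _ _ H.
rewrite -powRrM mulVf ?gt_eqF // powRr1; last by rewrite addr_ge0 // mulr_ge0 // ?powR_ge0 // subr_ge0.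
apply; rewrite nnegrE ?powR_ge0 //.
by rewrite addr_ge0 // mulr_ge0 // subr_ge0.
Qed.

Lemma jC e x y b : e < 0 -> 0 < x -> 0 < y -> 0 <= b -> b <= 1 ->
  powR (b * x + (1 - b) * y) e <= b * powR x e + (1 - b) * powR y e.
Proof.
move=> e0 x0 y0 b0 b1.
have m0 : 0 < b * x + (1 - b) * y.
  have [->|bn0] := eqVneq b 0; first by rewrite mul0r add0r subr0 mul1r.
  have bp : 0 < b by rewrite lt_neqAle eq_sym bn0 b0.
  by rewrite ltr_pwDl // ?mulr_gt0 // mulr_ge0 // ?subr_ge0 // ltW.
rewrite /powR !gt_eqF //.
have := @concave_ln R (Itv01 b0 b1) x y x0 y0.
rewrite !convRE /= => Hl.
apply: (le_trans (y := expR (b * (e * ln x) + (1 - b) * (e * ln y)))).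
  rewrite ler_expR.
  rewrite mulrCA (mulrCA (1 - b)) -mulrDr ler_wnM2l //; exact: ltW.
by have := @convex_expR R (Itv01 b0 b1) (e * ln x) (e * ln y); rewrite !convRE.
Qed.

Lemma ln_le_sub1 z : 0 < z -> ln z <= z - 1.
Proof. move=> z0; have := expR_ge1Dx (ln z); rewrite lnK ?posrE //; lra. Qed.

Lemma jD_aux x m b : 0 <= x -> 0 <= b -> b * x <= m ->
  b * x * (ln m - ln x) <= b * (m - x).
Proof.
move=> x0 b0 hm.
have [x00|xn0] := eqVneq x 0.
  rewrite x00 in hm *; rewrite mulr0 mul0r subr0 mulr_ge0 //.
  by rewrite mulr0 in hm.
have xp : 0 < x by rewrite lt0r xn0.
have [mp|] := ltP 0 m.
  rewrite -ln_div ?posrE // -mulrA ler_wpM2l //.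
  have := @ln_le_sub1 (m / x) (divr_gt0 mp xp).
  move=> /(ler_wpM2l (ltW xp)); rewrite mulrBr mulr1 mulrCA mulfV ?mulr1 // gt_eqF //.
move=> m0; have bx0 : b * x = 0.
  by apply/eqP; rewrite eq_le (le_trans hm m0) mulr_ge0.
have b0' : b = 0 by move/eqP: bx0; rewrite mulf_eq0 (negbTE xn0) orbF => /eqP.
by rewrite b0' !mul0r.
Qed.

Lemma jD x y b : 0 <= x -> 0 <= y -> 0 <= b -> b <= 1 ->
  (b * x + (1 - b) * y) * ln (b * x + (1 - b) * y)
  <= b * (x * ln x) + (1 - b) * (y * ln y).
Proof.
move=> x0 y0 b0 b1; set m := b * x + (1 - b) * y.
have b1' : 0 <= 1 - b by rewrite subr_ge0.
have h1 := @jD_aux x m b x0 b0 (ler_wpDr (mulr_ge0 b1' y0) (lexx _)).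
have h2 := @jD_aux y m (1 - b) y0 b1' (ler_wpDl (mulr_ge0 b0 x0) (lexx _)).
have : b * x * (ln m - ln x) + (1 - b) * y * (ln m - ln y) <= b * (m - x) + (1 - b) * (m - y).
  exact: lerD.
have -> : b * (m - x) + (1 - b) * (m - y) = 0 by rewrite /m; ring.
rewrite /m; nra.
Qed.

Definition ent t U V : R :=
  U * (logs t U - logs t V) - logs (t - 1) U + logs (t - 1) V.

Lemma tstar_inv t : t != 2 -> tstar t * (2 - t) = 1.
Proof. by move=> t2; rewrite /tstar div1r mulVf // subr_eq0 eq_sym. Qed.

Lemma powRK2 t z : t != 2 -> 0 <= z -> powR (powR z (tstar t)) (2 - t) = z.
Proof. by move=> t2 z0; rewrite -powRrM (@tstar_inv t) // powRr1. Qed.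

Lemma powRK3 t z : t != 2 -> 0 <= z -> powR (powR z (2 - t)) (tstar t) = z.
Proof. by move=> t2 z0; rewrite -powRrM mulrC (@tstar_inv t) // powRr1. Qed.

Lemma ent_repr t u V : t != 1 -> t != 2 -> 0 <= u ->
  ent t (powR u (tstar t)) V = u / (1 - t) - (u - 1) / (2 - t) + logs (t - 1) V
    - powR V (1 - t) / (1 - t) * powR u (tstar t).
Proof.
move=> t1 t2 u0.
have t1' : (t - 1 == 1) = false by apply/negbTE; rewrite subr_eq (_ : 1 + 1 = 2) //.
have e0 : tstar t != 0.
  by apply/eqP => h; have := @tstar_inv t t2; rewrite h mul0r => /eqP; rewrite eq_sym oner_eq0.
have E1 : 1 - (t - 1) = 2 - t by ring.
have H1 : powR u (tstar t) * powR (powR u (tstar t)) (1 - t) = u.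
  have [->|un0] := eqVneq u 0; first by rewrite powR0 // mul0r.
  have U0 : powR u (tstar t) != 0 by rewrite powR_eq0 negb_and un0.
  rewrite -{1}(powRr1 (powR_ge0 u (tstar t))) -powRD; last by apply/implyP => _.
  by rewrite (_ : 1 + (1 - t) = 2 - t); [rewrite powRK2 | ring].
rewrite /ent /logs (negbTE t1) t1' E1 powRK2 //.
have a0 : 2 - t != 0 by rewrite subr_eq0 eq_sym.
have b0 : 1 - t != 0 by rewrite subr_eq0 eq_sym.
set U := powR u (tstar t) in H1 *.
set W := powR V (1 - t).
set Z := powR U (1 - t) in H1 *.
have -> : U * ((Z - 1) / (1 - t) - (W - 1) / (1 - t)) = (U * Z - U - U * W + U) / (1 - t)
  by field.
rewrite H1; field; by apply/andP.
Qed.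

Lemma ent_conv t V x y b : t != 2 -> 0 <= x -> 0 <= y -> 0 <= b -> b <= 1 ->
  (2 < t -> 0 < x /\ 0 < y) ->
  ent t (powR (b * x + (1 - b) * y) (tstar t)) V
  <= b * ent t (powR x (tstar t)) V + (1 - b) * ent t (powR y (tstar t)) V.
Proof.
move=> t2 x0 y0 b0 b1 hpos.
have b1' : 0 <= 1 - b by rewrite subr_ge0.
have m0 : 0 <= b * x + (1 - b) * y by rewrite addr_ge0 // mulr_ge0.
have [->|t1] := eqVneq t 1.
  have -> : tstar (1 : R) = 1 by rewrite /tstar (_ : 2 - 1 = 1 :> R) ?divr1 //; ring.
  rewrite !powRr1 //.
  have h0 : ((1 : R) - 1 == 1) = false by rewrite subrr eq_sym oner_eq0.
  rewrite /ent /logs eqxx h0 subrr subr0 !divr1 (powRr1 m0) (powRr1 x0) (powRr1 y0).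
  have := @jD x y b x0 y0 b0 b1.
  set m := b * x + (1 - b) * y; move=> H.
  have -> : m = b * x + (1 - b) * y by [].
  rewrite /m in H. nra.
rewrite (@ent_repr t (b * x + (1 - b) * y) V t1 t2 m0) (@ent_repr t x V t1 t2 x0) (@ent_repr t y V t1 t2 y0).
set W := powR V (1 - t).
set C := logs (t - 1) V.
have W0 : 0 <= W by exact: powR_ge0.
have a0 : 2 - t != 0 by rewrite subr_eq0 eq_sym.
have c0 : 1 - t != 0 by rewrite subr_eq0 eq_sym.
set e := tstar t.
set X := powR x e. set Y := powR y e. set M := powR (b * x + (1 - b) * y) e.
suff H : - (W / (1 - t)) * M <= - (W / (1 - t)) * (b * X + (1 - b) * Y).
  have E : forall u, u / (1 - t) - (u - 1) / (2 - t) + C = u * (1 / (1 - t) - 1 / (2 - t)) + (1 / (2 - t) + C).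
    by move=> u; field; apply/andP.
  rewrite !E; set k := (1 / (1 - t) - 1 / (2 - t)); set k2 := (1 / (2 - t) + C).
  set w := W / (1 - t) in H *.
  nra.
have [tlt1|tgt1] := ltP t 1.
  have [he1 he2] : 0 < e /\ e <= 1.
    rewrite /e /tstar; split; first by rewrite divr_gt0 // subr_gt0; lra.
    by rewrite ler_pdivrMr ?mul1r ?subr_gt0; lra.
  have w0 : 0 <= W / (1 - t) by rewrite divr_ge0 // subr_ge0; lra.
  rewrite !mulNr lerN2; apply: ler_wpM2l => //.
  exact: jB.
have w0 : - (W / (1 - t)) >= 0.
  by rewrite oppr_ge0 mulr_ge0_le0 // invr_le0 subr_le0.
apply: ler_wpM2l => //.
have [tlt2|tgt2] := ltP t 2.
  have he : 1 <= e.
    rewrite /e /tstar ler_pdivlMr ?mul1r ?subr_gt0 //; lra.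
  exact: jA.
have tgt2' : 2 < t by rewrite lt_neqAle eq_sym t2 tgt2.
have [xp yp] := hpos tgt2'.
have he : e < 0 by rewrite /e /tstar div1r invr_lt0 subr_lt0.
exact: jC.
Qed.
End J.

Theorem proposition2 (R : realType) (n : nat) (t eps beta : R)
    (r c : 'rV[R]_n) (P Q : 'M[R]_n) :
  t != 2 ->
  0 <= eps ->
  cosimplex t r -> cosimplex t c ->
  (2 < t -> [/\ forall i, 0 < r 0 i, forall j, 0 < c 0 j,
               forall i j, 0 < P i j & forall i j, 0 < Q i j]) ->
  coball t eps r c P -> coball t eps r c Q ->
  0 <= beta <= 1 ->
  coball t eps r c (comix t beta P Q).
Proof.
move=> t2 eps0 _ _ hpos [[P0 Pr Pc] DP] [[Q0 Qr Qc] DQ] /andP[b0 b1].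
have b1' : 0 <= 1 - beta by rewrite subr_ge0.
have tsE : 1 / tstar t = 2 - t by rewrite /tstar div1r div1r invrK.
rewrite tsE in Pr Pc Qr Qc.
have Me : forall i j, comix t beta P Q i j =
    powR (beta * powR (P i j) (2 - t) + (1 - beta) * powR (Q i j) (2 - t)) (tstar t).
  by move=> i j; rewrite /comix mxE tsE.
have mge0 : forall i j, 0 <= beta * powR (P i j) (2 - t) + (1 - beta) * powR (Q i j) (2 - t).
  by move=> i j; rewrite addr_ge0 // mulr_ge0 // powR_ge0.
split; first split.
- by move=> i j; rewrite Me powR_ge0.
- move=> i; rewrite tsE.
  rewrite (eq_bigr (fun j => beta * powR (P i j) (2 - t) + (1 - beta) * powR (Q i j) (2 - t))); last first.
    by move=> j _; rewrite Me powRK2.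
  rewrite big_split /= -!mulr_sumr Pr Qr; ring.
- move=> j; rewrite tsE.
  rewrite (eq_bigr (fun i => beta * powR (P i j) (2 - t) + (1 - beta) * powR (Q i j) (2 - t))); last first.
    by move=> i _; rewrite Me powRK2.
  rewrite big_split /= -!mulr_sumr Pc Qc; ring.
apply: (le_trans (y := beta * Dt t P (outer r c) + (1 - beta) * Dt t Q (outer r c))); last first.
  have := ler_wpM2l b0 DP; have := ler_wpM2l b1' DQ; nra.
rewrite /Dt !mulr_sumr -big_split; apply: ler_sum => i _.
rewrite !mulr_sumr -big_split; apply: ler_sum => j _.
change (ent R t (comix t beta P Q i j) (outer r c i j) <=
  beta * ent R t (P i j) (outer r c i j) + (1 - beta) * ent R t (Q i j) (outer r c i j)).
have H := @ent_conv R t (outer r c i j) (powR (P i j) (2 - t)) (powR (Q i j) (2 - t)) beta t2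
  (powR_ge0 _ _) (powR_ge0 _ _) b0 b1.
rewrite !powRK3 // in H.
rewrite Me; apply: H => t2'.
by case: (hpos t2') => _ _ hP hQ; rewrite !powR_gt0.
Qed.
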